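(* Suppose $|\hat\tau(u)-\tau(u)|\le\rho$ for every unit $u$, and let $\mathcal U_{\mathsf{LTK}}$ be the output of the LEA algorithm. Let $A_1=(\tau_K+2\rho,1]$, $K_1=|\{u:\tau(u)\in A_1\}|$, $K_0=K-K_1$, and $V(A_1)=\sum_{u:\tau(u)\in A_1}\tau(u)$. Then $$\frac{V_{\mathcal U_{\mathsf{LTK}}}([0,1])}{V_{\mathcal U^*}([0,1])}\ \ge\ 1-\frac{4\rho K_0}{V(A_1)+(\tau_K+2\rho)K_0}.$$
   Context: There are $M$ units with pairwise distinct treatment effects $\tau(u)\in[0,1]$ and a budget $K\in\{1,\dots,M\}$; $\tau_K$ is the $K$-th largest value of $\tau(u)$; $\mathcal U^*$ is the set of the $K$ units with the largest $\tau(u)$. For a set $S$ of units and an interval $A\subseteq[0,1]$, $V_S(A)=\sum_{u\in S,\,\tau(u)\in A}\tau(u)$. The LEA algorithm with parameters $\epsilon,\delta,\gamma>0$ sets $\rho=\gamma\sqrt\epsilon$, obtains for each unit an estimate $\hat\tau(u)$ (accurate to within $\rho$ with probability at least $1-\delta/M$), and outputs $\mathcal U_{\mathsf{LTK}}$, the $K$ units with largest $\hat\tau(u)$. *)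

(* Defs.v *)
From mathcomp Require Import all_boot all_order all_algebra.
Set Implicit Arguments. Unset Strict Implicit. Unset Printing Implicit Defensive.
Import Order.TTheory GRing.Theory Num.Theory.
Local Open Scope ring_scope.

Definition kth_largest (R : realDomainType) (T : finType) (f : T -> R)
  (K : nat) (t : R) : Prop :=
  exists u, t = f u /\ #|[set v | t < f v]| = K.-1.

Definition topK (R : realDomainType) (T : finType) (f : T -> R)
  (K : nat) (S : {set T}) : Prop :=
  #|S| = K /\ (forall u v, u \in S -> v \notin S -> f v <= f u).

Definition V (R : realDomainType) (T : finType) (tau : T -> R)
  (S : {set T}) (A : interval R) : R :=
  \sum_(u in S | tau u \in A) tau u.

(* Main.v *)
Require Import Defs.
From mathcomp Require Import all_boot all_order all_algebra.
From mathcomp Require Import zify ring lra.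
Import Order.TTheory GRing.Theory Num.Theory.
Local Open Scope ring_scope.

Lemma alg_fin (R : realFieldType) (L U N D : R) :
  0 < D -> 0 <= L -> 0 <= U -> N <= L -> N <= U -> U <= D -> N / D <= L / U.
Proof.
move=> D0 L0 U0 NL NU UD.
have [Ue|Upos] := eqVneq U 0.
  move: NU; rewrite Ue invr0 mulr0 ler_pdivrMr // mul0r => NU; lra.
have Up : 0 < U by rewrite lt_def Upos U0.
rewrite ler_pdivrMr // mulrAC ler_pdivlMr //.
nra.
Qed.

Theorem claim2 (R : rcfType) (M K : nat) (tau tauhat : 'I_M -> R)
  (eps delta gamma tK : R) (Ustar ULTK : {set 'I_M}) :
  injective tau ->
  (forall u, 0 <= tau u <= 1) ->
  (0 < K)%N -> (K <= M)%N ->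
  0 < eps -> 0 < delta -> 0 < gamma ->
  let rho := gamma * Num.sqrt eps in
  (forall u, `|tauhat u - tau u| <= rho) ->
  kth_largest tau K tK ->
  topK tau K Ustar ->
  topK tauhat K ULTK ->
  let A1 := `]tK + 2 * rho, 1] in
  let K1 := #|[set u | tau u \in A1]| in
  let K0 := K%:R - K1%:R in
  V tau ULTK `[0, 1] / V tau Ustar `[0, 1]
    >= 1 - (4 * rho * K0) / (V tau [set: 'I_M] A1 + (tK + 2 * rho) * K0).
Proof.
move=> inj tau01 Kpos KM eps0 delta0 gamma0 rho Hhat Hk HtU HtL.
cbv zeta.
set A1 := `]tK + 2 * rho, 1].
set S1 := [set u | tau u \in A1].
set K1 := #|S1|.
set K0 := K%:R - K1%:R.
case: Hk => u0 [HtK HG]; case: HtU => cU HU; case: HtL => cL HL.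
set G := [set v | tK < tau v].
have rho0 : 0 < rho by rewrite /rho mulr_gt0 // sqrtr_gt0.
have Hh u : tau u - rho <= tauhat u <= tau u + rho.
  by have := Hhat u; rewrite ler_norml => /andP[h1 h2]; apply/andP; split; lra.
have sub1 u : tK <= tau u -> u \in Ustar.
  move=> hu; apply/negPn/negP => nu.
  have sub : Ustar \subset G.
    apply/subsetP => w hw; rewrite inE.
    have := HU w u hw nu => hwu.
    have wu : w != u by apply: contraNneq nu => <-.
    have twu : tau w != tau u by rewrite (inj_eq inj).
    apply: (le_lt_trans hu); rewrite lt_neqAle eq_sym twu hwu //.
  have := subset_leq_card sub; rewrite cU HG; lia.
have HUs u : (u \in Ustar) = (tK <= tau u).
  have sub : [set v | tK <= tau v] \subset Ustar.
    by apply/subsetP => v; rewrite inE; apply: sub1.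
  have e : [set v | tK <= tau v] = u0 |: G.
    apply/setP => v; rewrite !inE le_eqVlt HtK (inj_eq inj) eq_sym //.
  have eqS : [set v | tK <= tau v] == Ustar.
    rewrite eqEcard sub e cardsU1 HG cU !inE HtK ltxx /=; lia.
  by rewrite -(eqP eqS) inE.
have HS1 : S1 \subset ULTK.
  apply/subsetP => u; rewrite inE in_itv /= => /andP[hu _]; apply/negPn/negP => nu.
  have sub : ULTK \subset G.
    apply/subsetP => w hw; rewrite inE.
    have := HL w u hw nu; move: (Hh u) (Hh w) => /andP[h1 h2] /andP[h3 h4]; lra.
  have := subset_leq_card sub; rewrite cL HG; lia.
have HS1U : S1 \subset Ustar.
  apply/subsetP => u; rewrite inE in_itv /= HUs => /andP[hu _]; lra.
have HLlow v : v \in ULTK -> tK - 2 * rho <= tau v.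
  move=> hv; rewrite leNgt; apply/negP => hlt.
  have nvU : v \notin Ustar by rewrite HUs -ltNge; lra.
  have : ~~ (Ustar \subset ULTK).
    apply/negP => sub.
    have : Ustar == ULTK by rewrite eqEcard sub cL cU leqnn.
    by move/eqP => e; move: nvU; rewrite e hv.
  case/subsetPn => w hw nw.
  have := HL v w hv nw; rewrite HUs in hw.
  move: (Hh v) (Hh w) => /andP[h1 h2] /andP[h3 h4]; lra.
have K1K : (K1 <= K)%N by rewrite /K1 -cL subset_leq_card.
have K0e : K0 = (K - K1)%:R by rewrite /K0 natrB.
have VL : V tau ULTK `[0, 1] = \sum_(u in ULTK) tau u.
  by rewrite /V; apply: eq_bigl => u; rewrite in_itv /= tau01 andbT.
have VU : V tau Ustar `[0, 1] = \sum_(u in Ustar) tau u.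
  by rewrite /V; apply: eq_bigl => u; rewrite in_itv /= tau01 andbT.
have VA : V tau [set: 'I_M] A1 = \sum_(u in S1) tau u.
  by rewrite /V; apply: eq_bigl => u; rewrite !inE.
have splitL : \sum_(u in ULTK) tau u = \sum_(u in S1) tau u + \sum_(u in ULTK :\: S1) tau u.
  by rewrite (big_setID S1) /= (setIidPr HS1).
have splitU : \sum_(u in Ustar) tau u = \sum_(u in S1) tau u + \sum_(u in Ustar :\: S1) tau u.
  by rewrite (big_setID S1) /= (setIidPr HS1U).
have cardL : #|ULTK :\: S1| = (K - K1)%N by rewrite cardsD (setIidPr HS1) cL.
have cardU : #|Ustar :\: S1| = (K - K1)%N by rewrite cardsD (setIidPr HS1U) cU.
have lowL : (tK - 2 * rho) * K0 <= \sum_(u in ULTK :\: S1) tau u.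
  rewrite K0e -cardL mulr_natr -sumr_const; apply: ler_sum => u.
  by rewrite inE => /andP[_ hu]; apply: HLlow.
have lowU : tK * K0 <= \sum_(u in Ustar :\: S1) tau u.
  rewrite K0e -cardU mulr_natr -sumr_const; apply: ler_sum => u.
  by rewrite inE HUs => /andP[_ hu].
have upU : \sum_(u in Ustar :\: S1) tau u <= (tK + 2 * rho) * K0.
  rewrite K0e -cardU mulr_natr -sumr_const; apply: ler_sum => u.
  rewrite in_setD in_set /A1 in_itv /= => /andP[hu _]; move: hu; case/andP: (tau01 u) => _ h1; rewrite h1 andbT -leNgt //.
have V1ge : 0 <= \sum_(u in S1) tau u by apply: sumr_ge0 => x _; case/andP: (tau01 x).
have tK0 : 0 <= tK by rewrite HtK; case/andP: (tau01 u0).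
have K0ge : 0 <= K0 by rewrite K0e ler0n.
have Lge : 0 <= \sum_(u in ULTK) tau u by apply: sumr_ge0 => x _; case/andP: (tau01 x).
have Uge : 0 <= \sum_(u in Ustar) tau u by apply: sumr_ge0 => x _; case/andP: (tau01 x).
move: V1ge splitL splitU VA.
set V1 := \sum_(u in S1) tau u.
move=> V1ge splitL splitU VA.
have Dpos : 0 < V1 + (tK + 2 * rho) * K0.
  have [K1lt|K1ge] := ltnP K1 K.
    have : 1 <= K0 by rewrite K0e ler1n subn_gt0.
    move=> h; have hp : 0 < (tK + 2 * rho) * K0 by apply: mulr_gt0; lra.
    lra.
  have : (0 < #|S1|)%N by apply: leq_trans Kpos K1ge.
  case/card_gt0P => w hw.
  have : tau w <= V1 by rewrite /V1 (bigD1 w) //= lerDl; apply: sumr_ge0 => x _; case/andP: (tau01 x).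
  move: hw; rewrite inE in_itv /= => /andP[hw _] h.
  have hp : 0 <= (tK + 2 * rho) * K0 by apply: mulr_ge0; lra.
  lra.
rewrite VL VU VA.
have -> : 1 - 4 * rho * K0 / (V1 + (tK + 2 * rho) * K0) =
  (V1 + (tK - 2 * rho) * K0) / (V1 + (tK + 2 * rho) * K0).
  by field; rewrite gt_eqF.
rewrite splitL splitU.
move: lowL lowU upU Lge Uge V1ge Dpos.
rewrite splitL splitU.
set a := \sum_(u in ULTK :\: S1) tau u.
set b := \sum_(u in Ustar :\: S1) tau u.
move=> lowL lowU upU Lge Uge V1ge' Dpos'.
apply: alg_fin => //.
have rK : 0 <= rho * K0 by apply: mulr_ge0; lra.
all: lra.
Qed.
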